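(* Let $(G,o)$ be a directed median graph and let $v$ be a vertex of $G$. Then: (i) $\mathcal{F}_o(v,G)$ induces a convex subgraph of $G$; (ii) the restriction of the partial order $\prec_o$ to $\mathcal{F}_o(v,G)$ coincides with the restriction of the canonical basepoint order $\le_v$ to $\mathcal{F}_o(v,G)$; (iii) $\mathcal{F}_o(v,G)$ together with $\prec_o$ is (isomorphic to) the domain of an event structure; (iv) for any vertex $u\in \mathcal{F}_o(v,G)$, the principal filter $\mathcal{F}_o(u,G)$ is included in $\mathcal{F}_o(v,G)$ and coincides with the principal filter of $u$ with respect to the order $\le_v$ restricted to $\mathcal{F}_o(v,G)$.
   Context: A graph $G$ is median if for every three vertices $x,y,z$ the set $I(x,y)\cap I(y,z)\cap I(z,x)$ is a single vertex, where $I(u,w)=\{t: d(u,t)+d(t,w)=d(u,w)\}$ and $d$ is the graph distance. A subgraph is convex if it contains $I(x,y)$ for all its vertices $x,y$. For a vertex $v$, the canonical basepoint order is $x\le_v y$ iff $x\in I(v,y)$. A directed median graph $(G,o)$ is a median graph $G$ with an orientation $o$ of its edges such that opposite edges of every 4-cycle (square) of $G$ are oriented in the same direction (when the square is traversed so that they are parallel). The relation $\prec_o$ on vertices is defined by $x\prec_o y$ iff there is a directed path (possibly of length $0$) from $x$ to $y$; it is a partial order. The principal filter of $v$ is $\mathcal{F}_o(v,G)=\{x: v\prec_o x\}$. An event structure is a triple $(E,\le,\#)$ where $E$ is a set, $\le$ is a partial order on $E$ with $\{e'\,:\,e'\le e\}$ finite for all $e$, $\#$ is an irreflexive symmetric relation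 with $e\#e'$ and $e'\le e''$ implying $e\# e''$. A configuration is a finite subset of $E$ that is downward closed for $\le$ and contains no two events in conflict; the domain of the event structure is the set of configurations ordered by inclusion. *)

(* Defs.v *)
From Stdlib Require Import Arith List Relations.

Set Implicit Arguments.

Definition simple_graph (V : Type) (adj : V -> V -> Prop) : Prop :=
  (forall x y, adj x y -> adj y x) /\ (forall x, ~ adj x x).

Inductive walk (V : Type) (adj : V -> V -> Prop) : V -> V -> nat -> Prop :=
| walk_nil : forall x, walk adj x x 0
| walk_cons : forall x y z n, adj x y -> walk adj y z n -> walk adj x z (S n).

Definition connected (V : Type) (adj : V -> V -> Prop) : Prop :=
  forall x y, exists n, walk adj x y n.

Definition is_dist (V : Type) (adj : V -> V -> Prop) (x y : V) (n : nat) : Prop :=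
  walk adj x y n /\ (forall m, walk adj x y m -> n <= m).

Definition interval (V : Type) (adj : V -> V -> Prop) (x y t : V) : Prop :=
  exists a b n, is_dist adj x t a /\ is_dist adj t y b /\ is_dist adj x y n /\ a + b = n.

Definition median_graph (V : Type) (adj : V -> V -> Prop) : Prop :=
  simple_graph adj /\ connected adj /\
  forall x y z, exists m,
    (interval adj x y m /\ interval adj y z m /\ interval adj z x m) /\
    forall m', interval adj x y m' -> interval adj y z m' -> interval adj z x m' -> m' = m.

Definition orientation (V : Type) (adj : V -> V -> Prop) (arc : V -> V -> Prop) : Prop :=
  (forall x y, arc x y -> adj x y) /\
  (forall x y, adj x y -> arc x y \/ arc y x) /\
  (forall x y, arc x y -> ~ arc y x).

Definition square (V : Type) (adj : V -> V -> Prop) (x1 x2 x3 x4 : V) : Prop :=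
  x1 <> x2 /\ x1 <> x3 /\ x1 <> x4 /\ x2 <> x3 /\ x2 <> x4 /\ x3 <> x4 /\
  adj x1 x2 /\ adj x2 x3 /\ adj x3 x4 /\ adj x4 x1.

(* Directed median graph: opposite edges x1x2 and x4x3 of every square are
   oriented in the same direction (applied to all labellings of the square,
   this covers both pairs of opposite edges). *)
Definition directed_median_graph (V : Type) (adj : V -> V -> Prop) (arc : V -> V -> Prop) : Prop :=
  median_graph adj /\ orientation adj arc /\
  forall x1 x2 x3 x4, square adj x1 x2 x3 x4 -> (arc x1 x2 <-> arc x4 x3).

Definition prec_o (V : Type) (arc : V -> V -> Prop) : V -> V -> Prop :=
  clos_refl_trans V arc.

Definition filter_o (V : Type) (arc : V -> V -> Prop) (v x : V) : Prop :=
  prec_o arc v x.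

Definition base_le (V : Type) (adj : V -> V -> Prop) (v x y : V) : Prop :=
  interval adj v y x.

Definition convex_set (V : Type) (adj : V -> V -> Prop) (S : V -> Prop) : Prop :=
  forall x y t, S x -> S y -> interval adj x y t -> S t.

Definition finite_set (E : Type) (P : E -> Prop) : Prop :=
  exists l : list E, forall e, P e -> In e l.

Definition event_structure (E : Type) (le : E -> E -> Prop) (conf : E -> E -> Prop) : Prop :=
  (forall e, le e e) /\
  (forall e e', le e e' -> le e' e -> e = e') /\
  (forall e e' e'', le e e' -> le e' e'' -> le e e'') /\
  (forall e, finite_set (fun e' => le e' e)) /\
  (forall e, ~ conf e e) /\
  (forall e e', conf e e' -> conf e' e) /\
  (forall e e' e'', conf e e' -> le e' e'' -> conf e e'').

Definition configuration (E : Type) (le : E -> E -> Prop) (conf : E -> E -> Prop) (C : E -> Prop) : Prop :=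
  finite_set C /\
  (forall e e', C e -> le e' e -> C e') /\
  (forall e e', C e -> C e' -> ~ conf e e').

(* (S, R) is order-isomorphic to the domain (configurations ordered by inclusion)
   of some event structure; configurations are compared extensionally. *)
Definition iso_to_es_domain (V : Type) (S : V -> Prop) (R : V -> V -> Prop) : Prop :=
  exists (E : Type) (le conf : E -> E -> Prop) (f : V -> E -> Prop),
    event_structure le conf /\
    (forall x, S x -> configuration le conf (f x)) /\
    (forall C, configuration le conf C -> exists x, S x /\ forall e, f x e <-> C e) /\
    (forall x y, S x -> S y -> (R x y <-> forall e, f x e -> f y e)).

(* Main.v *)
Require Import Defs.
From Stdlib Require Import Arith List Relations Lia Classical ClassicalEpsilon FunctionalExtensionality PropExtensionality ProofIrrelevance.

Lemma exists_min (P : nat -> Prop) : (exists n, P n) -> exists n, P n /\ forall m, P m -> n <= m.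
Proof.
  intros [n Hn]. revert Hn. induction n as [n IH] using lt_wf_ind. intros Hn.
  destruct (classic (exists m, m < n /\ P m)) as [[m [Hm1 Hm2]]|Hno].
  - exact (IH m Hm1 Hm2).
  - exists n; split; auto. intros m Hm. destruct (Nat.le_gt_cases n m); auto.
    exfalso; apply Hno; eauto.
Qed.

Section Med.
Variable V : Type.
Variables adj arc : V -> V -> Prop.
Hypothesis Hsym : forall x y, adj x y -> adj y x.
Hypothesis Hirr : forall x, ~ adj x x.
Hypothesis Hconn : connected adj.
Hypothesis Hmed : forall x y z, exists m,
    (interval adj x y m /\ interval adj y z m /\ interval adj z x m) /\
    forall m', interval adj x y m' -> interval adj y z m' -> interval adj z x m' -> m' = m.

Lemma dist_ex x y : exists n, is_dist adj x y n.
Proof. destruct (exists_min (fun n => walk adj x y n)) as [n [H1 H2]]. apply Hconn.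
  exists n; split; auto. Qed.

Definition d x y : nat := proj1_sig (constructive_indefinite_description _ (dist_ex x y)).

Lemma d_spec x y : is_dist adj x y (d x y).
Proof. unfold d. destruct (constructive_indefinite_description _ _); auto. Qed.

Lemma d_walk x y : walk adj x y (d x y).
Proof. apply d_spec. Qed.
Lemma d_min x y n : walk adj x y n -> d x y <= n.
Proof. apply d_spec. Qed.
Lemma is_dist_d x y n : is_dist adj x y n -> d x y = n.
Proof. intros [H1 H2]. pose proof (d_spec x y) as [H3 H4].
  specialize (H2 _ H3); specialize (H4 _ H1); lia. Qed.

Lemma walk_app x y z n m : walk adj x y n -> walk adj y z m -> walk adj x z (n + m).
Proof. induction 1; simpl; auto. intros; econstructor; eauto. Qed.

Lemma walk_snoc x y z n : walk adj x y n -> adj y z -> walk adj x z (S n).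
Proof. intros H1 H2. replace (S n) with (n + 1) by lia. eapply walk_app; eauto.
  econstructor; eauto; constructor. Qed.

Lemma walk_rev x y n : walk adj x y n -> walk adj y x n.
Proof. induction 1. constructor. eapply walk_snoc; eauto. Qed.

Lemma d_sym x y : d x y = d y x.
Proof. pose proof (d_min _ _ _ (walk_rev _ _ _ (d_walk x y))).
  pose proof (d_min _ _ _ (walk_rev _ _ _ (d_walk y x))). lia. Qed.

Lemma d_tri x y z : d x z <= d x y + d y z.
Proof. apply d_min. apply walk_app with y; apply d_walk. Qed.

Lemma walk0 x y : walk adj x y 0 -> x = y.
Proof. intros H; inversion H; auto. Qed.

Lemma d0 x y : d x y = 0 -> x = y.
Proof. intros H. apply walk0. rewrite <- H. apply d_walk. Qed.
Lemma d_refl x : d x x = 0.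
Proof. pose proof (d_min x x 0 (walk_nil _ _)). lia. Qed.

Lemma walk1 x y : walk adj x y 1 -> adj x y.
Proof. intros H; inversion H; subst. apply walk0 in H4; subst; auto. Qed.

Lemma d_adj x y : adj x y -> d x y = 1.
Proof. intros H. assert (d x y <= 1). apply d_min; eapply walk_cons; [eauto|constructor].
  destruct (d x y) eqn:E; [|lia]. apply d0 in E; subst; exfalso; eapply Hirr; eauto. Qed.

Lemma d1 x y : d x y = 1 -> adj x y.
Proof. intros H. apply walk1. rewrite <- H; apply d_walk. Qed.

Lemma d_lip z x y : adj x y -> d z x <= d z y + 1.
Proof. intros H. pose proof (d_tri z y x). rewrite (d_adj y x) in H0 by auto. lia. Qed.

Lemma step_first x y n : d x y = S n -> exists x', adj x x' /\ d x' y = n.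
Proof. intros H. pose proof (d_walk x y) as W. rewrite H in W. inversion W; subst.
  exists y0; split; auto. pose proof (d_min _ _ _ H4) as A.
  pose proof (d_tri x y0 y) as B. rewrite (d_adj x y0) in B by auto. lia. Qed.

Lemma step_last x y n : d x y = S n -> exists y', adj y' y /\ d x y' = n.
Proof. intros H. rewrite d_sym in H. destruct (step_first _ _ _ H) as [y' [H1 H2]].
  exists y'; split; auto. rewrite d_sym; auto. Qed.

Lemma interval_iff x y t : interval adj x y t <-> d x t + d t y = d x y.
Proof. split.
  - intros (a & b & n & H1 & H2 & H3 & H4). apply is_dist_d in H1, H2, H3. lia.
  - intros H. exists (d x t), (d t y), (d x y). repeat split; try apply d_spec; auto. Qed.

Lemma median x y z : exists m,
    (d x m + d m y = d x y /\ d y m + d m z = d y z /\ d z m + d m x = d z x) /\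
    forall m', d x m' + d m' y = d x y -> d y m' + d m' z = d y z -> d z m' + d m' x = d z x -> m' = m.
Proof. destruct (Hmed x y z) as [m [[H1 [H2 H3]] H4]]. exists m.
  rewrite !interval_iff in H1, H2, H3. split; auto. intros m' A B C.
  apply H4; apply interval_iff; auto. Qed.

Lemma d_bip z x y : adj x y -> d z x <> d z y.
Proof. intros Hxy E. destruct (median z x y) as [m [[H1 [H2 H3]] _]].
  rewrite (d_adj x y) in H2 by auto.
  assert (d x m = 0 \/ d m y = 0) as [A|A] by lia.
  - apply d0 in A. rewrite <- A in *. rewrite (d_sym y x), (d_sym x z), (d_sym y z), (d_adj x y) in H3 by auto. lia.
  - apply d0 in A. rewrite A in *. rewrite (d_sym y x), (d_adj x y) in H1 by auto. lia.
Qed.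

Lemma d_adj_cases z x y : adj x y -> d z y = S (d z x) \/ d z x = S (d z y).
Proof. intros H. pose proof (d_lip z x y H). pose proof (d_lip z y x (Hsym _ _ H)).
  pose proof (d_bip z x y H). lia. Qed.

Definition W a b z := d z a < d z b.

Lemma W_compl a b z : adj a b -> (W a b z <-> ~ W b a z).
Proof. intros H; unfold W. pose proof (d_adj_cases z a b H). lia. Qed.

Lemma two_apart x y c : adj x c -> adj c y -> x <> y -> ~ adj x y -> d x y = 2.
Proof. intros H1 H2 H3 H4. pose proof (d_tri x c y). rewrite (d_adj x c), (d_adj c y) in H by auto.
  destruct (d x y) as [|[|[|n]]] eqn:E; try lia.
  - apply d0 in E; contradiction.
  - apply d1 in E; contradiction. Qed.

Lemma not_adj_eq z x y : d z x = d z y -> ~ adj x y.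
Proof. intros E H. eapply d_bip; eauto. Qed.

Lemma not_adj_2 z x y : d z x = d z y + 2 -> ~ adj x y.
Proof. intros E H. pose proof (d_adj_cases z x y H). lia. Qed.

Lemma neq_d z x y : d z x <> d z y -> x <> y.
Proof. intros E H; subst; auto. Qed.

Lemma sq_half p q r s z : adj p q -> adj r s -> adj p r -> adj q s -> p <> s -> q <> r ->
  W p q z -> W r s z.
Proof.
  intros Hpq Hrs Hpr Hqs Hps Hqr. unfold W. intros Hw.
  destruct (classic (d z r < d z s)) as [|Hn]; auto. exfalso.
  pose proof (d_adj_cases z p q Hpq). pose proof (d_adj_cases z r s Hrs).
  pose proof (d_adj_cases z p r Hpr). pose proof (d_adj_cases z q s Hqs).
  assert (Hzr : d z r = S (d z p)) by lia.
  assert (Hzs : d z s = d z p) by lia.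
  assert (Hzq : d z q = S (d z p)) by lia.
  assert (Dps : d p s = 2).
  { apply two_apart with q; auto. apply not_adj_eq with z; lia. }
  destruct (median p s z) as [w [[M1 [M2 M3]] _]].
  rewrite Dps in M1. rewrite (d_sym s z), Hzs in M2. rewrite (d_sym s w), (d_sym w z) in M2.
  rewrite (d_sym w p) in M3.
  assert (A1 : d p w = 1) by lia. assert (A2 : d w s = 1) by lia.
  apply d1 in A1. apply d1 in A2.
  assert (Hzw : S (d z w) = d z p) by lia.
  destruct (median q r w) as [m [_ U]].
  assert (Dqr : d q r = 2).
  { apply two_apart with p; auto. apply not_adj_eq with z; lia. }
  assert (Drw : d r w = 2).
  { apply two_apart with p; auto. apply neq_d with z; lia. apply not_adj_2 with z; lia. }
  assert (Dwq : d w q = 2).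
  { apply two_apart with p; auto. apply neq_d with z; lia. intro HH; apply (not_adj_2 z q w); [lia|auto]. }
  assert (Ep : p = m).
  { apply U.
    - rewrite Dqr, (d_sym q p), (d_adj p q), (d_adj p r); auto.
    - rewrite Drw, (d_sym r p), (d_adj p r), (d_adj p w); auto.
    - rewrite Dwq, (d_sym w p), (d_adj p w), (d_adj p q); auto. }
  assert (Es : s = m).
  { apply U.
    - rewrite Dqr, (d_adj q s), (d_sym s r), (d_adj r s); auto.
    - rewrite Drw, (d_adj r s), (d_sym s w), (d_adj w s); auto.
    - rewrite Dwq, (d_adj w s), (d_sym s q), (d_adj q s); auto. }
  congruence.
Qed.

Lemma sq_W p q r s z : adj p q -> adj r s -> adj p r -> adj q s -> p <> s -> q <> r ->
  (W p q z <-> W r s z).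
Proof. intros. split; apply sq_half; auto. Qed.

Lemma dc z x y : adj x y -> d x z = S (d y z) \/ d y z = S (d x z).
Proof. intros H. rewrite (d_sym x z), (d_sym y z). pose proof (d_adj_cases z x y H). lia. Qed.

Lemma adj_neq x y : adj x y -> x <> y.
Proof. intros H E; subst; eapply Hirr; eauto. Qed.

Hypothesis Hor1 : forall x y, arc x y -> adj x y.
Hypothesis Hor2 : forall x y, adj x y -> arc x y \/ arc y x.
Hypothesis Hor3 : forall x y, arc x y -> ~ arc y x.
Hypothesis Hsq : forall x1 x2 x3 x4, square adj x1 x2 x3 x4 -> (arc x1 x2 <-> arc x4 x3).

Lemma theta k : forall a b x y, adj a b -> adj x y -> W a b x -> W b a y -> d x a = k ->
  (forall z, W a b z <-> W x y z) /\ (arc a b <-> arc x y).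
Proof.
  induction k as [|k IH]; intros a b x y Hab Hxy Wx Wy Hk; unfold W in Wx, Wy.
  - apply d0 in Hk. subst x. rewrite (d_sym y a), (d_adj a y) in Wy by auto.
    assert (d y b = 0) as E by lia. apply d0 in E; subst. tauto.
  - destruct (step_first x a k Hk) as [x' [Hxx' Hx'a]].
    pose proof (dc a a b Hab). pose proof (dc b a b Hab).
    pose proof (dc a x y Hxy). pose proof (dc b x y Hxy).
    pose proof (dc a x x' Hxx'). pose proof (dc b x x' Hxx').
    pose proof (d_adj_cases x a b Hab). pose proof (d_adj_cases y a b Hab).
    pose proof (d_adj_cases x' a b Hab).
    pose proof (d_sym x a). pose proof (d_sym x b). pose proof (d_sym y a). pose proof (d_sym y b).
    pose proof (d_sym x' a). pose proof (d_sym x' b).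
    assert (Hxb : d x b = S (S k)) by lia.
    assert (Hya : d y a = S (S k)) by lia.
    assert (Hyb : d y b = S k) by lia.
    assert (Hx'b : d x' b = S k) by lia.
    assert (Dx'y : d x' y = 2).
    { apply two_apart with x; auto. apply neq_d with a; lia.
      intro HH; apply (not_adj_2 a y x'); [rewrite (d_sym a y), (d_sym a x'); lia|auto]. }
    destruct (median x' y b) as [m [[M1 [M2 M3]] _]].
    rewrite Dx'y in M1. rewrite Hyb in M2. rewrite (d_sym b x'), Hx'b in M3.
    rewrite (d_sym b m) in M3. rewrite (d_sym y m) in M2. rewrite (d_sym m x') in M3.
    assert (A1 : d x' m = 1) by lia. assert (A2 : d m y = 1) by lia.
    assert (Hmb : d m b = k) by lia.
    apply d1 in A1. apply d1 in A2.
    pose proof (dc a x' m A1). pose proof (dc a m y A2).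
    assert (Hma : d m a = S k) by lia.
    assert (W1 : W a b x') by (unfold W; lia). assert (W2 : W b a m) by (unfold W; lia).
    destruct (IH a b x' m) as [IH1 IH2]; auto.
    assert (Nx'y : x' <> y) by (apply neq_d with a; lia).
    assert (Nmx : m <> x) by (apply neq_d with b; pose proof (d_sym m b); lia).
    split.
    + intros z. rewrite IH1. apply sq_W; auto.
    + rewrite IH2. apply Hsq. unfold square.
      repeat split; auto using adj_neq.
Qed.

Lemma Wab_or a b z : adj a b -> W a b z \/ W b a z.
Proof. intros H; unfold W. pose proof (d_adj_cases z a b H); lia. Qed.

Lemma W_excl a b z : W a b z -> W b a z -> False.
Proof. unfold W; lia. Qed.

Lemma theta' a b x y : adj a b -> adj x y -> W a b x -> W b a y ->
  (forall z, W a b z <-> W x y z) /\ (arc a b <-> arc x y).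
Proof. intros; eapply theta; eauto. Qed.

Lemma cross (P : V -> Prop) s t : clos_refl_trans V arc s t -> P s -> ~ P t ->
  exists p q, arc p q /\ P p /\ ~ P q.
Proof. intros H. apply clos_rt_rt1n in H. induction H; intros.
  - contradiction.
  - destruct (classic (P y)); eauto. Qed.

Lemma L2 s t a b : clos_refl_trans V arc s t -> adj a b -> W a b s -> W b a t -> arc a b.
Proof. intros H Hab Ws Wt.
  destruct (cross (W a b) s t H Ws) as (p & q & Hpq & Wp & Wq).
  - intro. eapply W_excl; eauto.
  - destruct (Wab_or a b q Hab) as [|Wq']; [contradiction|].
    destruct (theta' a b p q Hab (Hor1 _ _ Hpq) Wp Wq') as [_ E]. tauto. Qed.

Variable v : V.
Definition Fv x := clos_refl_trans V arc v x.

Lemma L1 u w : Fv u -> arc u w -> d v w = S (d v u).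
Proof. intros Hu Huw. pose proof (Hor1 _ _ Huw) as A.
  destruct (d_adj_cases v u w A) as [|E]; auto. exfalso.
  apply (Hor3 _ _ Huw). apply (L2 v u w u); auto.
  - unfold W; lia.
  - unfold W. rewrite d_refl, (d_adj u w); auto. Qed.

Lemma path_len x y : clos_refl_trans V arc x y -> Fv x -> d v y = d v x + d x y.
Proof. intros H Hx.
  assert (exists n, walk adj x y n /\ d v y = d v x + n) as [n [Wn En]].
  { apply clos_rt_rt1n in H. induction H.
    - exists 0; split; [constructor| lia].
    - assert (Fv y) as Fy by (eapply rt_trans; eauto; apply rt_step; auto).
      destruct (IHclos_refl_trans_1n Fy) as [n [Wn En]].
      exists (S n); split. econstructor; eauto.
      rewrite (L1 x y) in En; auto. lia. }
  pose proof (d_min _ _ _ Wn). pose proof (d_tri v x y). lia. Qed.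

Lemma geo_arc s t : clos_refl_trans V arc s t -> forall n x y, d x y = n ->
  d s x + d x y + d y t = d s t -> clos_refl_trans V arc x y.
Proof. intros Hst n. induction n as [|n IH]; intros x y Hn E.
  - apply d0 in Hn; subst; apply rt_refl.
  - destruct (step_first x y n Hn) as [x' [Hxx' Hx'y]].
    pose proof (d_tri s x' y). pose proof (d_tri x' y t). pose proof (d_tri s x' t).
    pose proof (d_tri s x x'). rewrite (d_adj x x') in H2 by auto.
    pose proof (d_tri x y t). pose proof (d_tri s x t).
    pose proof (d_tri x x' t). rewrite (d_adj x x') in H5 by auto.
    pose proof (d_sym t x). pose proof (d_sym t x').
    assert (arc x x').
    { apply (L2 s t); auto; unfold W; lia. }
    eapply rt_trans. apply rt_step; eauto. apply IH; auto. lia. Qed.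

Lemma down y x : Fv y -> d v x + d x y = d v y -> Fv x.
Proof. intros Fy E. apply (geo_arc v y Fy (d v x) v x); auto. rewrite d_refl. lia. Qed.

Lemma convex n : forall x y t, d x y = n -> Fv x -> Fv y -> d x t + d t y = d x y -> Fv t.
Proof. induction n as [|n IH]; intros x y t Hn Fx Fy E.
  - assert (d x t = 0) as E' by lia. apply d0 in E'; subst; auto.
  - destruct (d x t) as [|m] eqn:Ext.
    + apply d0 in Ext; subst; auto.
    + destruct (step_first x t m Ext) as [x' [Hxx' Hx't]].
      pose proof (d_tri x' t y). pose proof (d_tri x x' y). rewrite (d_adj x x') in H0 by auto.
      assert (Fv x').
      { destruct (d_adj_cases v x x' Hxx') as [A|A].
        - apply rt_trans with x; auto. apply rt_step. apply (L2 v y); auto; unfold W.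
          lia. rewrite (d_sym y x), (d_sym y x'). lia.
        - apply (down x); auto. rewrite (d_sym x' x), (d_adj x x'); auto. lia. }
      apply (IH x' y t); auto; lia. Qed.

Lemma prec_iff x y : Fv x -> Fv y -> (clos_refl_trans V arc x y <-> d v x + d x y = d v y).
Proof. intros Fx Fy; split.
  - intros H. symmetry. apply path_len; auto.
  - intros E. apply (geo_arc v y Fy (d x y)); auto. rewrite d_refl. lia. Qed.

Definition ev a b : V -> Prop := fun z => Fv z /\ W b a z.
Definition is_ev (P : V -> Prop) := exists a b, Fv a /\ arc a b /\ P = ev a b.
Definition Ev := {P : V -> Prop | is_ev P}.
Definition ele (e e' : Ev) := forall z, proj1_sig e' z -> proj1_sig e z.
Definition econf (e e' : Ev) := ~ exists z, proj1_sig e z /\ proj1_sig e' z.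
Definition fmap (x : V) (e : Ev) := proj1_sig e x.

Lemma mk_ev a b : Fv a -> arc a b -> is_ev (ev a b).
Proof. intros; exists a, b; auto. Qed.

Lemma E_eq (e e' : Ev) : (forall z, proj1_sig e z <-> proj1_sig e' z) -> e = e'.
Proof. destruct e as [P HP], e' as [Q HQ]; simpl; intros H.
  assert (P = Q) by (extensionality z; apply propositional_extensionality; auto).
  subst. f_equal. apply proof_irrelevance. Qed.

Lemma ev_b a b : Fv a -> arc a b -> ev a b b.
Proof. intros Fa Hab. split. eapply rt_trans; eauto; apply rt_step; auto.
  unfold W. rewrite d_refl, (d_adj b a); auto. Qed.

Lemma ev_not_v a b : Fv a -> arc a b -> ~ ev a b v.
Proof. intros Fa Hab [_ Hw]. unfold W in Hw. pose proof (L1 a b Fa Hab).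
  lia. Qed.

Lemma ev_mono x y a b : clos_refl_trans V arc x y -> Fv a -> arc a b -> ev a b x -> ev a b y.
Proof. intros Hxy Fa Hab [Fx Wx]. split. eapply rt_trans; eauto.
  destruct (Wab_or b a y (Hsym _ _ (Hor1 _ _ Hab))) as [|Wy]; auto.
  exfalso. apply (Hor3 _ _ Hab). apply (L2 x y b a); auto. Qed.

Lemma ev_edge y z a b : Fv y -> arc y z -> Fv a -> arc a b -> ev a b z -> ~ ev a b y ->
  forall w, ev a b w <-> ev y z w.
Proof. intros Fy Hyz Fa Hab [Fz Wz] Ny.
  assert (Wy : W a b y).
  { destruct (Wab_or a b y (Hor1 _ _ Hab)) as [|Wy]; auto. exfalso; apply Ny; split; auto. }
  destruct (theta' a b y z (Hor1 _ _ Hab) (Hor1 _ _ Hyz) Wy Wz) as [T _].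
  intros w; unfold ev. rewrite (W_compl z y w), (W_compl b a w) by (apply Hsym, Hor1; auto).
  rewrite T. tauto. Qed.

Lemma fin x : Fv x -> exists l : list Ev, forall e, proj1_sig e x -> In e l.
Proof. intros H. apply clos_rt_rtn1 in H. induction H.
  - exists nil. intros [P [a [b [Fa [Hab ->]]]]] HP. exfalso; eapply ev_not_v; eauto.
  - assert (Fy : Fv y) by (apply clos_rtn1_rt; auto).
    destruct IHclos_refl_trans_n1 as [l Hl].
    exists (exist _ (ev y z) (mk_ev y z Fy H) :: l).
    intros [P [a [b [Fa [Hab ->]]]]] HP. simpl in HP.
    destruct (classic (ev a b y)) as [Hy|Hy].
    + right. apply Hl. simpl. auto.
    + left. apply E_eq. simpl. intros w. symmetry. apply ev_edge; auto. Qed.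

Lemma es : event_structure ele econf.
Proof. unfold event_structure, ele, econf. repeat split.
  - auto.
  - intros e e' H1 H2. apply E_eq. intros; split; auto.
  - auto.
  - intros [P [a [b [Fa [Hab ->]]]]]. simpl.
    assert (Fb : Fv b) by (eapply rt_trans; eauto; apply rt_step; auto).
    destruct (fin b Fb) as [l Hl]. exists l. intros e' He'. apply Hl. apply He'. apply ev_b; auto.
  - intros [P [a [b [Fa [Hab ->]]]]] H. apply H. exists b. simpl. split; apply ev_b; auto.
  - intros e e' H [z [H1 H2]]. apply H; eauto.
  - intros e e' e'' H1 H2 [z [H3 H4]]. apply H1. eauto.
Qed.

Lemma config_f x : Fv x -> configuration ele econf (fmap x).
Proof. intros Fx. unfold configuration, fmap, ele, econf. repeat split.
  - apply fin; auto.
  - auto.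
  - intros e e' H1 H2 H. apply H; eauto. Qed.

Lemma order_iff x y : Fv x -> Fv y ->
  (clos_refl_trans V arc x y <-> forall e, fmap x e -> fmap y e).
Proof. intros Fx Fy. split.
  - intros H [P [a [b [Fa [Hab ->]]]]]. unfold fmap; simpl. apply ev_mono; auto.
  - intros H. apply prec_iff; auto.
    destruct (median v x y) as [m [[M1 [M2 M3]] _]].
    destruct (d m x) as [|j] eqn:Emx.
    + apply d0 in Emx. subst m. rewrite (d_sym y x), (d_sym x v), (d_sym y v) in M3. lia.
    + destruct (step_first m x j Emx) as [m' [Hmm' Hm'x]].
      assert (Fm : Fv m) by (apply (down x); auto; rewrite Emx; auto).
      pose proof (d_tri v m' x). pose proof (d_tri v m m'). rewrite (d_adj m m') in H1 by auto.
      assert (Harc : arc m m').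
      { apply (L2 v x); auto; unfold W. lia. rewrite (d_sym x m), (d_sym x m'). lia. }
      specialize (H (exist _ (ev m m') (mk_ev m m' Fm Harc))). unfold fmap in H; simpl in H.
      assert (Hy : ev m m' y).
      { apply H. split; auto. unfold W. rewrite (d_sym x m), (d_sym x m'). lia. }
      destruct Hy as [_ Wy]. unfold W in Wy. exfalso.
      pose proof (d_tri x m' y). pose proof (d_sym x m'). pose proof (d_sym m' y).
      pose proof (d_sym y m). pose proof (d_sym x m). lia.
Qed.

Lemma SQ a b c w : adj a b -> adj b c -> d a c = 2 -> W c b w -> W a b w ->
  exists u, adj a u /\ adj u c /\ u <> b.
Proof. intros Hab Hbc Dac Wc Wa. unfold W in *.
  pose proof (d_adj_cases w b c Hbc). pose proof (d_adj_cases w a b Hab).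
  destruct (median a c w) as [u [[M1 [M2 M3]] _]]. rewrite Dac in M1.
  pose proof (d_sym c w). pose proof (d_sym w u). pose proof (d_sym c u). pose proof (d_sym w a).
  assert (d a u <> 0).
  { intro E. apply d0 in E. subst u. rewrite (d_sym c a) in M2. lia. }
  assert (d u c <> 0).
  { intro E. apply d0 in E. subst u. rewrite (d_sym c a) in M3. lia. }
  assert (A1 : d a u = 1) by lia. assert (A2 : d u c = 1) by lia.
  exists u. split; [apply d1; auto|]. split; [apply d1; auto|].
  intro E; subst u. rewrite (d_sym b a), (d_adj a b) in M3 by auto. lia.
Qed.

Lemma max_in (C : Ev -> Prop) (l : list Ev) : (exists e, C e /\ In e l) ->
  exists H, C H /\ In H l /\ forall K, C K -> In K l -> ele H K -> K = H.
Proof. induction l as [|a l IH]; intros [e [Ce Ie]].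
  - destruct Ie.
  - destruct (classic (exists e, C e /\ In e l)) as [Ex|Nex].
    + destruct (IH Ex) as [H' [C' [I' M']]].
      destruct (classic (C a /\ ele H' a /\ a <> H')) as [[Ca [Ha Na]]|Hn].
      * exists a. split; auto. split; [left; auto|]. intros K CK [<-|IK] HK; auto.
        exfalso. assert (K = H') as ->. { apply M'; auto. intros z Hz. apply Ha, HK, Hz. }
        apply Na. apply E_eq. intros; split; auto.
      * exists H'. split; auto. split; [right; auto|]. intros K CK [<-|IK] HK; auto.
        apply NNPP. intro. apply Hn; auto.
    + exists a. destruct Ie as [<-|Ie]; [|exfalso; apply Nex; eauto].
      split; auto. split; [left; auto|]. intros K CK [<-|IK] HK; auto.
      exfalso; apply Nex; eauto.
Qed.

Definition rm (H : Ev) (l : list Ev) :=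
  filter (fun e => if excluded_middle_informative (e = H) then false else true) l.

Lemma rm_len H l : In H l -> length (rm H l) < length l.
Proof. induction l as [|a l IH]; simpl; intros I; [destruct I|].
  destruct (excluded_middle_informative (a = H)) as [E|E].
  - assert (length (rm H l) <= length l).
    { clear. induction l; simpl; auto. destruct (excluded_middle_informative _); simpl; lia. }
    lia.
  - destruct I as [->|I]; [congruence|]. simpl. specialize (IH I). lia.
Qed.

Lemma rm_in H l e : In e l -> e <> H -> In e (rm H l).
Proof. intros I N. unfold rm. apply filter_In. split; auto.
  destruct (excluded_middle_informative (e = H)); congruence. Qed.

Lemma extend y (C : Ev -> Prop) H : Fv y -> configuration ele econf C -> C H ->
  (forall e, fmap y e <-> (C e /\ e <> H)) ->
  exists z, Fv z /\ arc y z /\ (forall w, proj1_sig H w <-> ev y z w).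
Proof.
  intros Fy [_ [Cdown Cconf]] CH Hf.
  assert (Hy : ~ proj1_sig H y). { intro Hy. apply (Hf H) in Hy. tauto. }
  destruct (proj2_sig H) as [c [c' [Fc [Hcc' EP]]]]. rewrite EP in Hy |- *.
  destruct (exists_min (fun n => exists z, ev c c' z /\ d y z = n)) as [k [[z [Hz Ek]] Mk]].
  { exists (d y c'); exists c'; split; auto. apply ev_b; auto. }
  assert (Wy : W c c' y).
  { destruct (Wab_or c c' y (Hor1 _ _ Hcc')) as [|W']; auto. exfalso; apply Hy; split; auto. }
  destruct Hz as [Fz Wz].
  destruct k as [|[|j]].
  - apply d0 in Ek; subst. exfalso; apply Hy; split; auto.
  - apply d1 in Ek. destruct (theta' c c' y z (Hor1 _ _ Hcc') Ek Wy Wz) as [_ T].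
    assert (arc y z) by tauto.
    exists z; split; auto; split; auto. apply ev_edge; auto. split; auto.
  - exfalso.
    destruct (step_last y z (S j) Ek) as [b [Hbz Eb]].
    destruct (step_last y b j Eb) as [a [Hab Ea]].
    assert (Fb : Fv b).
    { apply (convex (d y z) y z b); auto. rewrite (d_adj b z); auto. lia. }
    assert (Daz : d a z = 2).
    { pose proof (d_tri a b z) as T1. rewrite (d_adj a b), (d_adj b z) in T1 by auto.
      pose proof (d_tri y a z). lia. }
    assert (Fa : Fv a).
    { apply (convex (d y z) y z a); auto. lia. }
    assert (Nb : ~ ev c c' b). { intro Hb. specialize (Mk (S j) (ex_intro _ b (conj Hb Eb))). lia. }
    assert (Wb : W c c' b).
    { destruct (Wab_or c c' b (Hor1 _ _ Hcc')) as [|W']; auto. exfalso; apply Nb; split; auto. }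
    destruct (theta' c c' b z (Hor1 _ _ Hcc') Hbz Wb Wz) as [_ T].
    assert (Abz : arc b z) by tauto.
    assert (EV : forall w, ev c c' w <-> ev b z w).
    { intros w. apply ev_edge; auto. split; auto. }
    assert (Fin : forall u, adj a u -> adj u z -> u <> b -> False).
    { intros u Hau Huz Nub.
      assert (Eu : d y u = S j).
      { pose proof (d_tri y a u) as T1. rewrite (d_adj a u) in T1 by auto.
        pose proof (d_tri y u z) as T2. rewrite (d_adj u z) in T2 by auto. lia. }
      assert (Fu : Fv u).
      { apply (convex (d y z) y z u); auto. rewrite (d_adj u z); auto. lia. }
      assert (Evu : ev c c' u).
      { apply EV. split; auto. apply (sq_W z b u a u); auto.
        - intro E; subst; lia.
        - unfold W. rewrite d_refl, (d_adj u a); auto. }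
      specialize (Mk (S j) (ex_intro _ u (conj Evu Eu))). lia. }
    destruct (Hor2 a b Hab) as [Aab|Aba].
    + set (K := exist _ (ev a b) (mk_ev a b Fa Aab) : Ev).
      destruct (classic (forall w, ev c c' w -> ev a b w)) as [All|Nall].
      * assert (CK : C K).
        { apply Cdown with H; auto.
          intros w Hw. rewrite EP in Hw. apply All. exact Hw. }
        assert (NK : K <> H).
        { intro E. apply Nb. assert (proj1_sig K b) by (simpl; apply ev_b; auto).
          rewrite E, EP in H0. exact H0. }
        assert (fmap y K).
        { apply Hf. split; auto. }
        destruct H0 as [_ Wy']. unfold W in Wy'. lia.
      * apply NNPP; intro Hn. apply Nall. intros w Hw. apply NNPP; intro Nw.
        apply Hn. destruct Hw as [Fw Ww].
        assert (W a b w).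
        { destruct (Wab_or a b w Hab) as [|W']; auto. exfalso; apply Nw; split; auto. }
        assert (ev b z w) as [_ Wzw] by (apply EV; split; auto).
        destruct (SQ a b z w Hab Hbz Daz Wzw H0) as [u [H1 [H2 H3]]]. eauto.
    + set (K := exist _ (ev b a) (mk_ev b a Fb Aba) : Ev).
      assert (fmap y K). { split; auto. unfold W; lia. }
      apply Hf in H0 as [CK NK].
      apply (Cconf _ _ CH CK). intros [w [Hw Kw]]. rewrite EP in Hw. simpl in Kw.
      destruct Kw as [Fw Wab]. assert (ev b z w) as [_ Wzw] by (apply EV; auto).
      destruct (SQ a b z w Hab Hbz Daz Wzw Wab) as [u [H1 [H2 H3]]]. eauto.
Qed.

Lemma surj n : forall C l, length l <= n -> (forall e, C e -> In e l) ->
  configuration ele econf C -> exists x, Fv x /\ forall e, fmap x e <-> C e.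
Proof.
  induction n as [|n IH]; intros C l Hl Cl Cf;
  (destruct (classic (exists e, C e)) as [[e0 Ce0]|Ne];
   [|exists v; split; [apply rt_refl|];
     intros [P [a [b [Fa [Hab ->]]]]]; unfold fmap; simpl; split;
     [intro Hv; exfalso; eapply ev_not_v; eauto | intro; exfalso; eauto]]).
  - destruct l; simpl in Hl; [|lia]. destruct (Cl e0 Ce0).
  - destruct (max_in C l) as [H [CH [IH' MH]]]; eauto.
    destruct (IH (fun e => C e /\ e <> H) (rm H l)) as [y [Fy Hf]].
    + pose proof (rm_len H l IH'). lia.
    + intros e [Ce Ne]. apply rm_in; auto.
    + destruct Cf as [_ [Cdown Cconf]]. split; [|split].
      * exists (rm H l). intros e [Ce Ne]. apply rm_in; auto.
      * intros e e' [Ce Ne] Hle. split; eauto. intro E; subst e'.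
        apply Ne. apply MH; auto.
      * intros e e' [Ce _] [Ce' _]. auto.
    + destruct (extend y C H Fy Cf CH Hf) as [z [Fz [Ayz EqH]]].
      exists z. split; auto. intro e.
      destruct (proj2_sig e) as [a [b [Fa [Hab EPe]]]]. unfold fmap.
      split.
      * intro Hz. destruct (classic (proj1_sig e y)) as [Hy|Ny].
        -- apply Hf in Hy; tauto.
        -- assert (e = H) as -> ; auto.
           apply E_eq. intros w. rewrite EqH, EPe.
           rewrite EPe in Hz, Ny. apply ev_edge; auto.
      * intro Ce. destruct (classic (e = H)) as [->|Ne].
        -- apply EqH. apply ev_b; auto.
        -- assert (Hy : fmap y e) by (apply Hf; auto). unfold fmap in Hy.
           rewrite EPe in Hy |- *. apply ev_mono with y; auto. apply rt_step; auto.
Qed.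

Lemma main_sec :
  convex_set adj Fv /\
  (forall x y, Fv x -> Fv y -> (clos_refl_trans V arc x y <-> base_le adj v x y)) /\
  iso_to_es_domain Fv (clos_refl_trans V arc) /\
  (forall u, Fv u -> (forall x, clos_refl_trans V arc u x -> Fv x) /\
     (forall x, clos_refl_trans V arc u x <-> (Fv x /\ base_le adj v u x))).
Proof.
  assert (BL : forall x y, base_le adj v x y <-> d v x + d x y = d v y).
  { intros x y. unfold base_le. apply interval_iff. }
  split; [|split; [|split]].
  - intros x y t Fx Fy It. apply interval_iff in It. apply (convex (d x y) x y t); auto.
  - intros x y Fx Fy. rewrite BL. apply prec_iff; auto.
  - exists Ev, ele, econf, fmap. split; [apply es|]. split; [apply config_f|]. split.
    + intros C Cf. pose proof Cf as [[l Hl] _].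
      destruct (surj (length l) C l) as [x [Fx Hx]]; auto. exists x; auto.
    + intros x y Fx Fy. apply order_iff; auto.
  - intros u Fu. assert (T : forall x, clos_refl_trans V arc u x -> Fv x).
    { intros x Hx. eapply rt_trans; eauto. }
    split; auto. intros x. rewrite BL. split.
    + intros Hx. split; auto. apply prec_iff; auto.
    + intros [Fx E]. apply prec_iff; auto.
Qed.

End Med.

Theorem lemma4p1 (V : Type) (adj arc : V -> V -> Prop) (v : V) :
  directed_median_graph adj arc ->
  (* (i) *)
  convex_set adj (filter_o arc v) /\
  (* (ii) *)
  (forall x y, filter_o arc v x -> filter_o arc v y ->
     (prec_o arc x y <-> base_le adj v x y)) /\
  (* (iii) *)
  iso_to_es_domain (filter_o arc v) (prec_o arc) /\
  (* (iv) *)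
  (forall u, filter_o arc v u ->
     (forall x, filter_o arc u x -> filter_o arc v x) /\
     (forall x, filter_o arc u x <-> (filter_o arc v x /\ base_le adj v u x))).
Proof.
  intros [[[Hsym Hirr] [Hconn Hmed]] [[Ho1 [Ho2 Ho3]] Hsq]].
  exact (main_sec V adj arc Hsym Hirr Hconn Hmed Ho1 Ho2 Ho3 Hsq v).
Qed.
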